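(* Let $x_1,\dots,x_N\in\mathbb{R}^q$ and let $d:\mathbb{R}^q\times\mathbb{R}^q\to\mathbb{R}_{\ge0}$ be any function such that for every subset $J\subseteq\{1,\dots,N\}$ the function $x\mapsto\sum_{i\in J}d(x,x_i)$ attains its minimum on $\mathbb{R}^q$ (for $J=\emptyset$ this is the zero function). Let $\mu$ be a choice function assigning to each subset $J\subseteq\{1,\dots,N\}$ a fixed point $\mu(J)\in\operatorname{argmin}_{x}\sum_{i\in J}d(x,x_i)$. Let $\hat x_0\in\mathbb{R}^q$ be arbitrary and define recursively $$C_n=\{i\in\{1,\dots,N\}: d(\hat x_n,x_i)<1\},\qquad \hat x_{n+1}=\mu(C_n).$$ Then the sequence $(\hat x_n)$ is stationary: there exists $n_0$ such that $\hat x_n=\hat x_{n_0}$ for all $n\ge n_0$.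
   Context: This is generalized mean shift with the triangular profile $k(u)=\max(1-u,0)$, whose weight function is $g(u)=1$ if $u<1$ and $g(u)=0$ if $u\ge1$. The associated objective is $f(x)=\sum_{i=1}^N\max(1-d(x,x_i),0)=\sum_{i:\,d(x,x_i)<1}(1-d(x,x_i))$. *)

(* Defs.v *)
(* R^q is rendered as row vectors 'rV[R]_q over an arbitrary
   real field R (the statement is purely order-theoretic/combinatorial). *)
From HB Require Import structures.
From mathcomp Require Import all_boot all_order all_algebra.
Set Implicit Arguments. Unset Strict Implicit. Unset Printing Implicit Defensive.
Import Order.TTheory GRing.Theory Num.Theory.
Local Open Scope ring_scope.

Definition nbhd (R : realFieldType) (q N : nat)
  (d : 'rV[R]_q -> 'rV[R]_q -> R) (X : 'I_N -> 'rV[R]_q) (x : 'rV[R]_q)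
  : {set 'I_N} := [set i | d x (X i) < 1].

Fixpoint ms_iter (R : realFieldType) (q N : nat)
  (d : 'rV[R]_q -> 'rV[R]_q -> R) (X : 'I_N -> 'rV[R]_q)
  (mu : {set 'I_N} -> 'rV[R]_q) (x0 : 'rV[R]_q) (n : nat) : 'rV[R]_q :=
  match n with
  | 0%N => x0
  | n'.+1 => mu (nbhd d X (ms_iter d X mu x0 n'))
  end.

(* Main.v *)
Require Import Defs.
From HB Require Import structures.
From mathcomp Require Import all_boot all_order all_algebra.
From mathcomp Require Import lra.
Import Order.TTheory GRing.Theory Num.Theory.
Local Open Scope ring_scope.

Section Helpers.
Variables (R : realFieldType) (q N : nat) (X : 'I_N -> 'rV[R]_q)
  (d : 'rV[R]_q -> 'rV[R]_q -> R) (mu : {set 'I_N} -> 'rV[R]_q).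
Hypothesis mu_argmin : forall (J : {set 'I_N}) (x : 'rV[R]_q),
      \sum_(i in J) d (mu J) (X i) <= \sum_(i in J) d x (X i).

Definition fobj (y : 'rV[R]_q) : R := \sum_(i in nbhd d X y) (1 - d y (X i)).

Lemma step_aux y :
  fobj y <= \sum_(i in nbhd d X y :&: nbhd d X (mu (nbhd d X y))) (1 - d (mu (nbhd d X y)) (X i)).
Proof.
set C := nbhd d X y; set z := mu C.
have h1 : fobj y <= \sum_(i in C) (1 - d z (X i)).
  by rewrite /fobj -/C !sumrB lerD2l lerN2; apply: mu_argmin.
apply: (le_trans h1).
rewrite (big_setID (nbhd d X z)) /= gerDl.
apply: sumr_le0 => i; rewrite !inE => /andP [Hn _].
by rewrite subr_le0 leNgt.
Qed.

Lemma step_le y : fobj y <= fobj (mu (nbhd d X y)).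
Proof.
apply: (le_trans (step_aux y)).
rewrite /fobj (big_setID (nbhd d X y) (A := nbhd d X (mu (nbhd d X y)))) /=.
rewrite setIC lerDl.
apply: sumr_ge0 => i; rewrite !inE => /andP [_ Hi].
by rewrite subr_ge0 ltW.
Qed.

Lemma step_sub y : fobj (mu (nbhd d X y)) <= fobj y ->
  nbhd d X (mu (nbhd d X y)) \subset nbhd d X y.
Proof.
move=> Hle; apply/negPn/negP => /subsetPn [i Hi Hni].
have H := step_aux y.
move: Hle; rewrite /fobj (big_setID (nbhd d X y) (A := nbhd d X (mu (nbhd d X y)))) /=.
rewrite setIC.
rewrite [\sum_(j in _ :\: _) _](bigD1 i) /=; last by rewrite in_setD Hni Hi.
have Hpos : 0 < 1 - d (mu (nbhd d X y)) (X i).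
  by move: Hi; rewrite inE subr_gt0.
have Hrest : 0 <= \sum_(j in nbhd d X (mu (nbhd d X y)) :\: nbhd d X y | j != i)
     (1 - d (mu (nbhd d X y)) (X j)).
  apply: sumr_ge0 => j /andP [Hj _]; move: Hj; rewrite in_setD => /andP [_ Hj].
  by move: Hj; rewrite inE => Hj; rewrite subr_ge0 ltW.
move: H; rewrite /fobj => H.
lra.
Qed.

End Helpers.

Theorem theorem1 (R : realFieldType) (q N : nat)
  (X : 'I_N -> 'rV[R]_q)
  (d : 'rV[R]_q -> 'rV[R]_q -> R)
  (d_nonneg : forall x y, 0 <= d x y)
  (d_attain : forall J : {set 'I_N}, exists m : 'rV[R]_q,
      forall x : 'rV[R]_q, \sum_(i in J) d m (X i) <= \sum_(i in J) d x (X i))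
  (mu : {set 'I_N} -> 'rV[R]_q)
  (mu_argmin : forall (J : {set 'I_N}) (x : 'rV[R]_q),
      \sum_(i in J) d (mu J) (X i) <= \sum_(i in J) d x (X i))
  (x0 : 'rV[R]_q) :
  exists n0 : nat, forall n : nat, (n0 <= n)%N ->
    ms_iter d X mu x0 n = ms_iter d X mu x0 n0.
Proof.
pose x n := ms_iter d X mu x0 n.
pose C n := nbhd d X (x n).
have xS n : x n.+1 = mu (C n) by [].
have mono n k : @fobj R q N X d (x n) <= @fobj R q N X d (x (n + k)%N).
  elim: k => [|k IH]; first by rewrite addn0.
  apply: (le_trans IH); rewrite addnS xS; exact: (@step_le R q N X d mu mu_argmin).
have stat n : C n.+1 = C n -> forall m, (n.+1 <= m)%N -> x m = x n.+1.
  move=> H m /subnKC <-; elim: (m - n.+1)%N => [|k IH]; first by rewrite addn0.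
  by rewrite addnS xS /C IH -/(C n.+1) H.
pose h := fun i : 'I_(#|{set 'I_N}|.+1) => C (val i).
have : ~~ injectiveb h.
  apply/negP => /injectiveP /leq_card; by rewrite card_ord ltnn.
move/dinjectivePn => [i _ [j]]; rewrite !inE andbT => Hij Hh.
have [a [b [Hab Hcab]]] : exists a b, (a < b)%N /\ C a = C b.
  rewrite /h in Hh.
  case: (ltngtP (val i) (val j)) => H.
  - by exists (val i), (val j).
  - by exists (val j), (val i).
  - by move: Hij; rewrite (val_inj H) eqxx.
have xab : x a.+1 = x b.+1 by rewrite !xS Hcab.
have subk k : (a.+1 <= k)%N -> (k <= b)%N -> C k.+1 \subset C k.
  move=> H1 H2; rewrite /C xS; apply: (@step_sub R q N X d mu mu_argmin).
  rewrite -xS.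
  have e1 := mono k.+1 (b.+1 - k.+1)%N.
  rewrite subnKC // in e1.
  have e2 := mono a.+1 (k - a.+1)%N.
  rewrite subnKC // in e2.
  by rewrite -xab in e1; apply: (le_trans e1).
have chain t : (a.+2 + t <= b.+1)%N -> C (a.+2 + t)%N \subset C a.+2.
  elim: t => [|t IH] Ht; first by rewrite addn0.
  have Ht' : (a.+2 + t <= b.+1)%N by apply: leq_trans Ht; rewrite addnS.
  have Hs : C (a.+2 + t).+1 \subset C (a.+2 + t).
    apply: subk; first by rewrite addSn (leq_trans (leq_addr t _) (leqnSn _)).
    by move: Ht; rewrite addnS.
  rewrite addnS; exact: subset_trans Hs (IH Ht').
have Hb : C b.+1 \subset C a.+2.
  have := chain (b.+1 - a.+2)%N; rewrite subnKC //; by apply.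
have Heq : C a.+2 = C a.+1.
  apply/eqP; rewrite eqEsubset subk //.
  by rewrite /C xab; exact: Hb.
exists a.+2 => n Hn.
change (x n = x a.+2).
by rewrite (stat a.+1 Heq n) // (stat a.+1 Heq a.+2).
Qed.
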